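(* For every integer $n\ge 0$, the strong product $P_3\boxtimes (R_n\ast K_1)$ is $1$-perfectly orientable.
   Context: All graphs are finite and simple. An orientation of a graph $G$ is $1$-perfect if the out-neighborhood of every vertex induces a clique in $G$; $G$ is $1$-perfectly orientable if it admits a $1$-perfect orientation. The strong product $G\boxtimes H$ has vertex set $V(G)\times V(H)$, with distinct $(u,v),(u',v')$ adjacent iff $u'\in N_G[u]$ and $v'\in N_H[v]$ (closed neighborhoods). $P_3$ is the path on $3$ vertices. For an integer $n\ge 0$, the raft $R_n$ is the graph with vertex set $X\cup Y$, where $X=\{x_0,\dots,x_n\}$ and $Y=\{y_0,\dots,y_n\}$ are disjoint cliques, and, for $0\le i,j\le n$, $x_i$ is adjacent to $y_j$ iff $i+j\ge n+1$ (no other edges). $R_n\ast K_1$ is $R_n$ with an added vertex adjacent to all vertices of $R_n$. *)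

(* Defs.v *)
From mathcomp Require Import all_boot.
Set Implicit Arguments. Unset Strict Implicit. Unset Printing Implicit Defensive.

Definition simple_graph (T : finType) (e : rel T) : Prop :=
  (forall x, ~~ e x x) /\ (forall x y, e x y = e y x).

Definition is_orientation (T : finType) (e o : rel T) : Prop :=
  (forall x y, o x y -> e x y) /\ (forall x y, e x y -> o x y (+) o y x).

Definition one_perfect (T : finType) (e o : rel T) : Prop :=
  forall v x y, o v x -> o v y -> x != y -> e x y.

Definition one_perfectly_orientable (T : finType) (e : rel T) : Prop :=
  exists o : rel T, is_orientation e o /\ one_perfect e o.

Definition strong_prod (T1 T2 : finType) (e1 : rel T1) (e2 : rel T2) : rel (T1 * T2) :=
  fun p q => [&& p != q, (p.1 == q.1) || e1 p.1 q.1 & (p.2 == q.2) || e2 p.2 q.2].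

Definition P3 : rel 'I_3 := fun i j => (i.+1 == j :> nat) || (j.+1 == i :> nat).

(* The raft R_n: vertex (false, i) is x_i, vertex (true, j) is y_j, i,j in 0..n. *)
Definition raft (n : nat) : rel (bool * 'I_n.+1) :=
  fun p q => (p != q) &&
    (if p.1 == q.1 then true else n.+1 <= p.2 + q.2).

Arguments raft n : clear implicits.

(* R_n * K_1: the apex is None. *)
Definition raft_K1 (n : nat) : rel (option (bool * 'I_n.+1)) :=
  fun p q => match p, q with
             | None, None => false
             | None, Some _ | Some _, None => true
             | Some a, Some b => raft n a b
             end.
Arguments raft_K1 n : clear implicits.

(* Main.v *)
Require Import Defs.
From mathcomp Require Import all_boot zify.
Set Implicit Arguments. Unset Strict Implicit. Unset Printing Implicit Defensive.

Definition NH n t1 i1 t2 i2 := [|| t1==2, t2==2, t1==t2 | n.+1 <= i1+i2].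
Definition CL (l1 l2 : nat) := [|| l1==l2, l1.+1==l2 | l2.+1==l1].
Definition E n l1 t1 i1 l2 t2 i2 :=
  [&& [|| l1 != l2, t1 != t2 | i1 != i2], CL l1 l2 & NH n t1 i1 t2 i2].
Definition key n (l t i : nat) :=
  if t==2 then 3*n+10 else if l==0 then (if t==1 then i else n.+1+i)
  else if l==2 then (if t==0 then i else n.+1+i) else 2*i+t.
Definition down (l t i kt ki : nat) :=
  if kt==2 then true else if l==0 then (if kt==0 then true else (t==1)&&(i<=ki))
  else (if kt==1 then true else (t==0)&&(i<=ki)).
Definition A n l1 t1 i1 l2 t2 i2 :=
  if l1==l2 then key n l1 t1 i1 < key n l2 t2 i2
  else if l2==1 then down l1 t1 i1 t2 i2
  else if l1==1 then ~~ down l2 t2 i2 t1 i1 else false.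

Ltac c3 x := let H := fresh in (have H : (x = 0 \/ x = 1 \/ x = 2) by lia); case: H => [?|[?|?]]; subst x.

Lemma orientN n l1 t1 i1 l2 t2 i2 :
  l1 < 3 -> t1 < 3 -> l2 < 3 -> t2 < 3 ->
  i1 <= n -> i2 <= n -> (t1 = 2 -> i1 = 0) -> (t2 = 2 -> i2 = 0) ->
  E n l1 t1 i1 l2 t2 i2 -> A n l1 t1 i1 l2 t2 i2 (+) A n l2 t2 i2 l1 t1 i1.
Proof.
move=> hl1 ht1 hl2 ht2 *.
c3 l1; c3 t1; c3 l2; c3 t2;
  unfold E, A, key, down, NH, CL in *; simpl in *; lia.
Qed.

Definition T n := ('I_3 * option (bool * 'I_n.+1))%type.
Definition Lv {n} (p : T n) : nat := val p.1.
Definition Ty {n} (p : T n) : nat := match p.2 with None => 2 | Some (b,_) => if b then 1 else 0 end.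
Definition Ix {n} (p : T n) : nat := match p.2 with None => 0 | Some (_,i) => val i end.

Lemma encP n (p : T n) : [/\ Lv p < 3, Ty p < 3, Ix p <= n & (Ty p = 2 -> Ix p = 0)].
Proof.
case: p => [[l hl] [[[] [i hi]]|]]; rewrite /Lv /Ty /Ix /=; split => //; lia.
Qed.

Lemma ordE k a b (ha : a < k) (hb : b < k) : (Ordinal ha == Ordinal hb) = (a == b).
Proof. by []. Qed.
Lemma someE (X : eqType) (x y : X) : (Some x == Some y) = (x == y).
Proof. by []. Qed.

Lemma sNE (X : eqType) (x : X) : (Some x == None) = false.
Proof. by []. Qed.
Lemma NsE (X : eqType) (x : X) : (None == Some x) = false.
Proof. by []. Qed.
Lemma NNE (X : eqType) : (None == None :> option X) = true.
Proof. by []. Qed.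

Lemma edgeE n (p q : T n) : strong_prod P3 (raft_K1 n) p q =
  E n (Lv p) (Ty p) (Ix p) (Lv q) (Ty q) (Ix q).
Proof.
case: p => [[l hl] h]; case: q => [[m hm] k].
case: h => [[[] [i hi]]|]; case: k => [[[] [j hj]]|];
rewrite /strong_prod /E /NH /CL /P3 /raft_K1 /raft /Lv /Ty /Ix /= ?xpair_eqE /= ?someE ?sNE ?NsE ?NNE ?xpair_eqE ?ordE /=;
apply/idP/idP; lia.
Qed.

Lemma encI n (p q : T n) : Lv p = Lv q -> Ty p = Ty q -> Ix p = Ix q -> p = q.
Proof.
case: p => [[l hl] h]; case: q => [[m hm] k]; rewrite /Lv /Ty /Ix /= => elm.
subst m; rewrite (bool_irrelevance hl hm).
case: h => [[[] [i hi]]|]; case: k => [[[] [j hj]]|] //= _ eij; subst j;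
  by rewrite (bool_irrelevance hi hj).
Qed.

Lemma mainN n l1 t1 i1 l2 t2 i2 l3 t3 i3 :
  l1 < 3 -> t1 < 3 -> l2 < 3 -> t2 < 3 -> l3 < 3 -> t3 < 3 ->
  i1 <= n -> i2 <= n -> i3 <= n ->
  (t1 = 2 -> i1 = 0) -> (t2 = 2 -> i2 = 0) -> (t3 = 2 -> i3 = 0) ->
  E n l1 t1 i1 l2 t2 i2 -> A n l1 t1 i1 l2 t2 i2 ->
  E n l1 t1 i1 l3 t3 i3 -> A n l1 t1 i1 l3 t3 i3 ->
  ~ (l2 = l3 /\ t2 = t3 /\ i2 = i3) -> E n l2 t2 i2 l3 t3 i3.
Proof.
move=> hl1 ht1 hl2 ht2 hl3 ht3 *.
c3 l1; c3 t1; c3 l2; c3 t2; c3 l3; c3 t3;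
  unfold E, A, key, down, NH, CL in *; simpl in *; lia.
Qed.

Lemma Esym n l1 t1 i1 l2 t2 i2 : E n l1 t1 i1 l2 t2 i2 = E n l2 t2 i2 l1 t1 i1.
Proof. rewrite /E /NH /CL; apply/idP/idP; lia. Qed.

Theorem corollary20 (n : nat) :
  one_perfectly_orientable (strong_prod P3 (raft_K1 n)).
Proof.
exists (fun p q : T n => strong_prod P3 (raft_K1 n) p q &&
   A n (Lv p) (Ty p) (Ix p) (Lv q) (Ty q) (Ix q)).
split; first split.
- by move=> x y /andP[].
- move=> x y exy.
  have eyx : strong_prod P3 (raft_K1 n) y x by rewrite edgeE Esym -edgeE.
  rewrite exy eyx /=.
  rewrite edgeE in exy.
  case: (encP x) => ? ? ? ?; case: (encP y) => ? ? ? ?.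
  exact: orientN.
- move=> v x y /andP[evx avx] /andP[evy avy] nxy.
  rewrite edgeE in evx; rewrite edgeE in evy; rewrite edgeE.
  case: (encP v) => hv1 hv2 hv3 hv4; case: (encP x) => hx1 hx2 hx3 hx4;
  case: (encP y) => hy1 hy2 hy3 hy4.
  apply: (mainN hv1 hv2 hx1 hx2 hy1 hy2 hv3 hx3 hy3 hv4 hx4 hy4 evx avx evy avy).
  move=> [h1 [h2 h3]]; move/eqP: nxy; apply; exact: encI.
Qed.
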